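(* Let $D$ be a reduced knot diagram with $n$ vertices and let $2\le k\le\infty$. Fix a version of the $k$-color region select game on $D$ and a checkerboard shading of $D$ whose unshaded regions admit an alternating signing; fix such a signing. Then the following hold. (1) For any shaded region $r$ and any unshaded region $r'$, every color configuration has a unique solving pattern in which $r$ and $r'$ are not pushed. (2) If $k$ is odd, then for any two unshaded regions of opposite signs, every color configuration has a unique solving pattern in which these two regions are not pushed. (3) Let $k<\infty$, let $S$ be a set of $i$ regions, and let $q$ be the number of color configurations having a solving pattern that does not push any region of $S$. - If $S$ contains at least one shaded and at least one unshaded region, then $q=k^{n+2-i}$. - If $i\ge1$ and $S$ consists only of shaded regions, or only of unshaded regions all of the same sign, then $q=k^{n+1-i}$. - If $S$ consists only of unshaded regions, not all of the same sign, then $q=k^{n+2-i}$ when $k$ is odd and $q=k^{n+2-i}/2$ when $k$ is even.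
   Context: Diagrams: a link (knot) diagram $D$ is the underlying graph of a regular projection of a link (knot) into $S^2$. Its vertices are the crossings, each of valence 4, and over/under information is ignored. Components without crossings are closed loops, each regarded as one edge with no vertices. Regions of $D$ are the connected components of $S^2\setminus D$. A vertex or edge is incident to a region if it lies in the boundary of that region. Two regions are adjacent if they are incident to a common edge. A vertex $v$ is reducible if some circle in $S^2$ meets $D$ transversely only at $v$, and irreducible otherwise. An irreducible vertex is incident to four distinct regions. A reducible vertex $v$ is incident to exactly three regions $r_0,r_1,r_2$, where $r_0$ touches $v$ from two sides and $r_1,r_2$ touch it from one side. A knot diagram with $n$ vertices has $n+2$ regions. A knot diagram is reduced if all its vertices are irreducible. Ring: for an integer $k\ge2$ let $\mathbb{Z}_k=\mathbb{Z}/k\mathbb{Z}$, and for $k=\infty$ let $\mathbb{Z}_\infty=\mathbb{Z}$. Game versions: a version of the $k$-color region select game on $D$ is a choice of an increment number $a(v,r)\in\mathbb{Z}_k$ for every incident vertex–region pair, subject to the following rules. - If $k<\infty$ and $v$ is irreducible, then $a(v,r)=a_v$ is the same for all regions $r$ incident to $v$, and $a_v$ is not a zero divisor of $\mathbb{Z}_k$. - If $k<\infty$ and $v$ is reducible, then $a(v,r_0)$ is arbitrary, while $a(v,r_1)$ and $a(v,r_2)$ are not zero divisors. - If $k=\infty$, then $a(v,r)=1$, except that $a(v,r_0)\in\mathbb{Z}$ is arbitrary when $v$ is reducible. - The original game is the version in which all increment numbers equal $1$. Game matrix: enumerate the vertices as $v_1,\dots,v_n$ and the regions as $r_1,\dots,r_m$.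 The game matrix is the $n\times m$ matrix $M$ over $\mathbb{Z}_k$ with $M_{ij}=a(v_i,r_j)$ if $v_i$ is incident to $r_j$, and $M_{ij}=0$ otherwise. Patterns and configurations: a push pattern is a vector $\mathbf p\in\mathbb{Z}_k^m$, and $\mathbf p(r_j)=p_j$ is the number of times $r_j$ is pushed. A region $r$ is not pushed in $\mathbf p$ if $\mathbf p(r)=0$. A color configuration is a vector $\mathbf c\in\mathbb{Z}_k^n$. Applying $\mathbf p$ to $\mathbf c$ yields $\mathbf c+M\mathbf p$. The configuration $\mathbf c$ is solvable if some $\mathbf p$ satisfies $M\mathbf p=-\mathbf c$; such a $\mathbf p$ is a solving pattern for $\mathbf c$. $D$ is always solvable in the version if every $\mathbf c\in\mathbb{Z}_k^n$ is solvable. A null pattern is an element of $Ker_k(M)=\{\mathbf p\in\mathbb{Z}_k^m: M\mathbf p=0\}$. Checkerboard shading: a checkerboard shading of $D$ is a shading of some of its regions such that, of any two adjacent regions, exactly one is shaded. Alternating signing: an alternating signing of the unshaded regions is an assignment of a sign $+$ or $-$ to each unshaded region such that every vertex is incident to two unshaded regions carrying opposite signs. *)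

(* Defs.v *)
From HB Require Import structures.
From mathcomp Require Import all_boot all_order fingroup perm all_algebra.
Set Implicit Arguments. Unset Strict Implicit. Unset Printing Implicit Defensive.
Import GRing.Theory.
Local Open Scope ring_scope.

(* The ring Z_k, 2 <= k <= oo: [Some k] is Z/kZ, [None] is Z (k = oo). *)
Definition Zk (k : option nat) : comUnitRingType :=
  match k with Some m => 'Z_m | None => int end.

Definition valid_k (k : option nat) : bool :=
  if k is Some m then (1 < m)%N else true.

Definition not_zero_divisor (R : comUnitRingType) (x : R) : Prop :=
  forall y : R, x * y = 0 -> y = 0.

Section Diagram.
Variable T : finType.        (* darts = half-edges at crossings *)
Variables s al : {perm T}.   (* s : rotation around a vertex; al : edge involution *)

(* face-tracing permutation: the region of dart d is the corner (sector)
   between d and s d; face_perm d is the next corner of the same region *)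
Definition face_perm : T -> T := fun d => (s^-1)%g (al d).
(* straight-ahead traversal of the curve through the crossings *)
Definition straight : T -> T := fun d => s (s (al d)).

(* (T, s, al) is a connected 4-regular map of genus 0 (a diagram in S^2)
   whose underlying curve has exactly one component (a knot). *)
Definition knot_map : Prop :=
  [/\ (forall d, al d != d /\ al (al d) = d),
      (forall d, fingraph.order s d = 4%N),
      (forall d e, connect (fun x y => (y == s x) || (y == al x)) d e),
      (fcard s T + fcard face_perm T = fcard al T + 2)%N
    & fcard straight T = 2%N].

Definition labeling (X : finType) (f : T -> T) (lab : T -> X) : Prop :=
  (forall d e, lab d = lab e <-> fconnect f d e) /\ (forall x, exists d, lab d = x).

Variables (V F : finType) (vtx : T -> V) (reg : T -> F).

Definition incident (v : V) (r : F) : bool :=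
  [exists d, (vtx d == v) && (reg d == r)].

Definition corners (v : V) (r : F) : nat :=
  #|[set d | (vtx d == v) && (reg d == r)]|.

Definition irreducible_vertex (v : V) : bool :=
  #|[set reg d | d in [pred d | vtx d == v]]| == 4%N.

Definition reduced : Prop := forall v, irreducible_vertex v.

Definition adjacent (r r' : F) : Prop :=
  exists d, (reg d = r /\ reg ((s^-1)%g d) = r') \/ (reg d = r' /\ reg ((s^-1)%g d) = r).

Definition checkerboard (shaded : pred F) : Prop :=
  forall r r', adjacent r r' -> shaded r != shaded r'.

Definition alternating_signing (shaded : pred F) (sgn : F -> bool) : Prop :=
  forall v, exists r1 r2, [/\ incident v r1, incident v r2, ~~ shaded r1, ~~ shaded r2
                            & sgn r1 != sgn r2].

Definition is_version (k : option nat) (a : V -> F -> Zk k) : Prop :=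
  match k with
  | Some _ =>
      forall v, if irreducible_vertex v then
                  exists av, not_zero_divisor av /\ forall r, incident v r -> a v r = av
                else forall r, incident v r -> corners v r = 1%N -> not_zero_divisor (a v r)
  | None =>
      forall v r, incident v r -> ~~ irreducible_vertex v && (corners v r >= 2)%N \/ a v r = 1
  end.

Definition game_apply (R : comUnitRingType) (a : V -> F -> R) (p : {ffun F -> R}) (v : V) : R :=
  \sum_(r | incident v r) a v r * p r.

Definition solving (R : comUnitRingType) (a : V -> F -> R) (c : {ffun V -> R}) (p : {ffun F -> R}) : Prop :=
  forall v, game_apply a p v = - c v.

Definition same_sign (sgn : F -> bool) (S : {set F}) : bool :=
  [forall r in S, [forall r' in S, sgn r == sgn r']].

Definition count_statement (m : nat) (shaded : pred F) (sgn : F -> bool)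
    (a : V -> F -> 'Z_m) : Prop :=
  forall S : {set F},
    let i := #|S| in
    let n := #|V| in
    let q := #|[set c : {ffun V -> 'Z_m} |
                 [exists p : {ffun F -> 'Z_m},
                    [forall r in S, p r == 0] &&
                    [forall v, game_apply a p v == - c v]]]| in
    [/\ [exists r in S, shaded r] && [exists r in S, ~~ shaded r] -> q = (m ^ (n + 2 - i))%N,
        (0 < i)%N && ((S \subset shaded) || ((S \subset [pred r | ~~ shaded r]) && same_sign sgn S))
          -> q = (m ^ (n + 1 - i))%N
      & (S \subset [pred r | ~~ shaded r]) && ~~ same_sign sgn S ->
          q = (if odd m then m ^ (n + 2 - i) else m ^ (n + 2 - i) %/ 2)%N].

Definition part3 (k : option nat) (shaded : pred F) (sgn : F -> bool) :
    (V -> F -> Zk k) -> Prop :=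
  match k as k0 return (V -> F -> Zk k0) -> Prop with
  | Some m => fun a => count_statement shaded sgn a
  | None => fun _ => True
  end.

End Diagram.

(* Main.v *)
Require Import Defs.
From HB Require Import structures.
From mathcomp Require Import all_boot all_order fingroup perm all_algebra.
Import GRing.Theory.
From mathcomp Require Import zify ring.
Set Implicit Arguments. Unset Strict Implicit. Unset Printing Implicit Defensive.
Import GRing.Theory.

Section Comb.
Variables (T : finType) (s al : {perm T}) (V F : finType) (vtx : T -> V) (reg : T -> F).
Variables (shaded : pred F) (sgn : F -> bool).
Hypothesis Hk : knot_map s al.
Hypothesis HV : labeling s vtx.
Hypothesis HF : labeling (face_perm s al) reg.
Hypothesis Hred : reduced vtx reg.
Hypothesis Hch : checkerboard s reg shaded.
Hypothesis Has : alternating_signing vtx reg shaded sgn.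

Lemma alK d : al (al d) = d. Proof. by case: Hk => H _ _ _ _; case: (H d). Qed.
Lemma al_neq d : al d != d. Proof. by case: Hk => H _ _ _ _; case: (H d). Qed.
Lemma ord4 d : fingraph.order s d = 4. Proof. by case: Hk. Qed.

Lemma s4 d : s (s (s (s d))) = d.
Proof. by have := iter_order (@perm_inj _ s) d; rewrite ord4. Qed.

Lemma iter_s_neq i j d : i < 4 -> j < 4 -> iter i s d = iter j s d -> i = j.
Proof.
move=> Hi Hj E.
have := findex_iter (f := s) (x := d) (i := i); rewrite ord4 => /(_ Hi).
by rewrite E findex_iter ?ord4.
Qed.

Lemma s1_neq d : s d != d.
Proof. by apply/eqP => E; have := @iter_s_neq 1 0 d erefl erefl E. Qed.
Lemma s2_neq d : s (s d) != d.
Proof. by apply/eqP => E; have := @iter_s_neq 2 0 d erefl erefl E. Qed.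

Lemma sinvE d : (s^-1)%g d = s (s (s d)).
Proof. by rewrite -{1}(s4 d) !permK. Qed.

Lemma face_reg x : reg (face_perm s al x) = reg x.
Proof. by case: HF => H _; apply/H; rewrite fconnect_sym ?fconnect1 //; apply: inj_comp; [exact: perm_inj|exact: perm_inj]. Qed.

Lemma reg_al d : reg (al d) = reg (s (s (s d))).
Proof. by rewrite -sinvE -(face_reg (al d)) /face_perm alK. Qed.

Lemma reg_sinv_al d : reg (s (s (s (al d)))) = reg d.
Proof. by rewrite -sinvE -[RHS]face_reg. Qed.

Lemma shade_s x : shaded (reg (s x)) = ~~ shaded (reg x).
Proof.
have: adjacent s reg (reg (s x)) (reg x) by exists (s x); left; rewrite permK.
by move/Hch; case: (shaded _); case: (shaded _).
Qed.

Lemma vtx_orbit d e : (vtx e == vtx d) = (e \in [:: d; s d; s (s d); s (s (s d))]).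
Proof.
case: HV => H _; apply/eqP/idP.
  move/H; rewrite fconnect_sym; last exact: perm_inj.
  by rewrite fconnect_orbit /orbit ord4.
by move=> He; apply/esym/H; rewrite fconnect_orbit /orbit ord4.
Qed.

Definition quad d := [:: reg d; reg (s d); reg (s (s d)); reg (s (s (s d)))].

Lemma incidentE d r : incident vtx reg (vtx d) r = (r \in quad d).
Proof.
apply/existsP/idP => [[x /andP[/eqP Hx /eqP <-]]|].
  have: x \in [:: d; s d; s (s d); s (s (s d))] by rewrite -vtx_orbit Hx.
  by rewrite !inE => /or4P[] /eqP->; rewrite eqxx ?orbT.
rewrite /quad !inE => /or4P[] /eqP->; [exists d|exists (s d)|exists (s (s d))|exists (s (s (s d)))];
  by rewrite vtx_orbit !inE !eqxx ?orbT.
Qed.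

Lemma quad_uniq d : uniq (quad d).
Proof.
apply/card_uniqP; have := Hred (vtx d); rewrite /irreducible_vertex => /eqP E. rewrite [size _]/= -E.
apply: eq_card => r.
apply/idP/imsetP => [Hr|[x Hx ->]].
  by move: Hr; rewrite -incidentE => /existsP[x /andP[Hx /eqP <-]]; exists x.
by rewrite -incidentE; apply/existsP; exists x; rewrite eqxx andbT.
Qed.


Lemma game_quad (R : comUnitRingType) (a : V -> F -> R) (av : R) d (p : {ffun F -> R}) :
  (forall r, incident vtx reg (vtx d) r -> a (vtx d) r = av) ->
  game_apply vtx reg a p (vtx d) =
    (av * (p (reg d) + p (reg (s d)) + p (reg (s (s d))) + p (reg (s (s (s d))))))%R.
Proof.
move=> Ha; rewrite /game_apply (eq_bigl (fun r => r \in quad d)); last by move=> r; rewrite incidentE.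
rewrite -(big_uniq _ (quad_uniq d)) (eq_big_seq (fun r => av * p r)%R) => [|r Hr]; last first.
  by rewrite Ha // incidentE.
rewrite /quad !big_cons big_nil /= !mulrDr addr0 !addrA; done.
Qed.

Lemma card_lab (X : finType) (f : T -> T) (lab : T -> X) :
  injective f -> labeling f lab -> #|X| = fcard f T.
Proof.
move=> injf [H1 H2]; rewrite /n_comp_mem.
have symf := fconnect_sym injf.
rewrite -(card_in_imset (f := lab)).
  set A := [set lab x | x in _].
  suff -> : A = [set: X] by rewrite cardsT.
  apply/eqP; rewrite eqEsubset subsetT /=; apply/subsetP => z _; have [d <-] := H2 z; apply/imsetP; exists (froot f d).
    by rewrite inE /= roots_root.
  by apply/H1; apply: connect_root.
move=> x y /andP[/eqP Hx _] /andP[/eqP Hy _] /H1 /(fingraph.rootP symf).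
by rewrite Hx Hy.
Qed.

Lemma fcard_mul (f : T -> T) n : injective f -> (forall x, fingraph.order f x = n) ->
  (fcard f T * n = #|T|)%N.
Proof.
move=> injf Ho; have := @fcard_order_set T f injf n predT.
rewrite (eq_n_comp_r (a' := T)) // => -> //.
  by apply/subsetP => x _; rewrite inE /= Ho.
Qed.

Lemma order_al d : fingraph.order al d = 2.
Proof.
have U : uniq [:: d; al d] by rewrite /= inE eq_sym al_neq.
rewrite /fingraph.order -[2]/(size [:: d; al d]) -(card_uniqP U).
apply: eq_card => e; apply/idP/idP => [He|].
  rewrite -(iter_findex He); elim: (findex _ _ _) => [|n IH]; first by rewrite !inE eqxx.
  by move: IH; rewrite !inE iterS => /orP[] /eqP->; rewrite ?alK eqxx ?orbT.
by rewrite !inE => /orP[] /eqP->; [exact: connect0 | exact: fconnect1].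
Qed.

Lemma faceF_inj : injective (face_perm s al).
Proof. by apply: inj_comp; exact: perm_inj. Qed.
Lemma st_inj : injective (straight s al).
Proof. by rewrite /straight => x y /perm_inj /perm_inj /perm_inj. Qed.

Lemma cardF : #|F| = (#|V| + 2)%N.
Proof.
case: Hk => _ _ _ Eu _.
rewrite (card_lab faceF_inj HF) (card_lab (@perm_inj _ s) HV).
have E1 := fcard_mul (@perm_inj _ s) ord4.
have E2 := fcard_mul (@perm_inj _ al) order_al.
lia.
Qed.


Lemma conn_st (Y : Type) (g : T -> Y) : (forall x, g (straight s al x) = g x) ->
  forall x y, fconnect (straight s al) x y -> g y = g x.
Proof.
move=> Hg x y /iter_findex <-; elim: (findex _ _ _) => [|n IH] //.
by rewrite iterS Hg.
Qed.

Lemma T_inhabited : exists d : T, true.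
Proof.
case: (pickP (@predT T)) => [d _|H0]; first by exists d.
case: Hk => _ _ _ _; rewrite /n_comp_mem eq_card0 // => x.
by have := H0 x.
Qed.

Lemma knot_sep : exists x, ~~ fconnect (straight s al) x (al x).
Proof.
case: (boolP [exists x, ~~ fconnect (straight s al) x (al x)]) => [/existsP // | /existsPn H].
exfalso; have {}H x : fconnect (straight s al) x (al x) by have := H x; rewrite negbK.
set st := straight s al.
have [d _] := T_inhabited.
have key1 y : st (s (s (st y))) = s (s y) by rewrite /st /straight s4 alK.
have rhoE y : s (s y) = st (al y) by rewrite /st /straight alK.
have Hd : fconnect st d (s (s d)).
  by apply: connect_trans (H d) _; rewrite rhoE; apply: fconnect1.
set j := findex st d (s (s d)).
have Hj : iter j st d = s (s d) by apply: iter_findex.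
have claim i : (i <= j)%N -> s (s (iter i st d)) = iter (j - i) st d.
  elim: i => [|i IH] Hi; first by rewrite subn0 Hj.
  have := IH (ltnW Hi); have -> : (j - i = (j - i.+1).+1)%N by lia.
  rewrite iterS -(key1 (iter i st d)) => /st_inj <-.
  by rewrite iterS.
have := odd_double_half j; set i := j./2; case: (odd j) => /= Ej.
  have Hi : (i <= j)%N by lia.
  have Hji : (j - i = i.+1)%N by lia.
  have := claim i Hi; rewrite Hji iterS rhoE => /st_inj /eqP.
  by rewrite (negbTE (al_neq _)).
have Hi : (i <= j)%N by lia.
have Hji : (j - i = i)%N by lia.
have := claim i Hi; rewrite Hji => /eqP.
by rewrite (negbTE (s2_neq _)).
Qed.

Lemma const_st (Y : Type) (g : T -> Y) : (forall x, g (straight s al x) = g x) ->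
  (forall x, g (al x) = g x) -> forall x y, g x = g y.
Proof.
move=> Hst Hal.
have [x0 Hx0] := knot_sep.
suff K y : g y = g x0 by move=> x y; rewrite !K.
set st := straight s al.
have symf := fconnect_sym st_inj.
set rt := froot st.
have Hrt z : g (rt z) = g z by apply: conn_st => //; apply: connect_root.
have N01 : rt x0 != rt (al x0).
  by apply: contra Hx0 => /eqP /(fingraph.rootP symf).
case: Hk => _ _ _ _ H2.
have Ry z : froots st (rt z) by apply: roots_root.
suff : (rt y == rt x0) || (rt y == rt (al x0)).
  by case/orP => /eqP E; rewrite -Hrt E Hrt // Hal.
apply/negPn/negP => /norP[Na Nb].
have U : uniq [:: rt x0; rt (al x0); rt y].
  by rewrite /= !inE negb_or N01 !(eq_sym _ (rt y)) Na Nb.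
have : (#|[:: rt x0; rt (al x0); rt y]| <= fcard st T)%N.
  rewrite /n_comp_mem; apply: subset_leq_card; apply/subsetP => z.
  by rewrite !inE => /or3P[] /eqP->; rewrite /= Ry.
by rewrite (card_uniqP U) H2.
Qed.

Lemma const_sal (Y : Type) (g : T -> Y) : (forall x, g (s x) = g x) ->
  (forall x, g (al x) = g x) -> forall x y, g x = g y.
Proof.
move=> Hs Hal x y; case: Hk => _ _ C _ _.
have /connectP[p Hp ->] := C x y.
elim: p x Hp => [|z p IH] x //= /andP[/orP[] /eqP -> Hp].
  by rewrite -IH // Hs.
by rewrite -IH // Hal.
Qed.


Lemma shade_s2 x : shaded (reg (s (s x))) = shaded (reg x).
Proof. by rewrite !shade_s negbK. Qed.
Lemma shade_s3 x : shaded (reg (s (s (s x)))) = ~~ shaded (reg x).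
Proof. by rewrite !shade_s negbK. Qed.

Section Ring.
Local Open Scope ring_scope.
Variables (R : comUnitRingType) (a : V -> F -> R).
Hypothesis Ha : forall v, exists av, not_zero_divisor av /\ forall r, incident vtx reg v r -> a v r = av.

Definition sig (r : F) : R := if shaded r then 0 else if sgn r then 1 else -1.
Definition chi (r : F) : R := if shaded r then 1 else -1.
Definition Epd (p : F -> R) d := p (reg d) + p (reg (s d)) + p (reg (s (s d))) + p (reg (s (s (s d)))).
Definition fe (p : F -> R) d := p (reg d) + p (reg (s (s (s d)))).

Lemma game_Epd d (p : {ffun F -> R}) : exists av, not_zero_divisor av /\
   game_apply vtx reg a p (vtx d) = av * Epd p d.
Proof.
have [av [Hn Hav]] := Ha (vtx d); exists av; split => //.
exact: game_quad.
Qed.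

Lemma null_Epd (p : {ffun F -> R}) : (forall v, game_apply vtx reg a p v = 0) -> forall d, Epd p d = 0.
Proof. by move=> H d; have [av [Hn E]] := game_Epd d p; apply: Hn; rewrite -E H. Qed.

Lemma Epd_null (p : {ffun F -> R}) : (forall d, Epd p d = 0) -> forall v, game_apply vtx reg a p v = 0.
Proof.
move=> H v; case: HV => _ /(_ v) [d <-].
by have [av [_ ->]] := game_Epd d p; rewrite H mulr0.
Qed.

Lemma Epd_chi d : Epd chi d = 0.
Proof.
rewrite /Epd /chi shade_s shade_s2 shade_s3.
by case: (shaded (reg d)); rewrite /= ?(addrN,addNr,add0r).
Qed.

Lemma Epd_sig d : Epd sig d = 0.
Proof.
have [r1 [r2 [I1 I2 U1 U2 D]]] := Has (vtx d).
move: I1 I2; rewrite !incidentE /quad !inE.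
rewrite /Epd /sig shade_s shade_s2 shade_s3.
case Hd: (shaded (reg d)) => /=.
  move=> /or4P[] /eqP E1; rewrite E1 ?Hd ?shade_s ?shade_s2 ?shade_s3 ?Hd // in U1 D *;
  move=> /or4P[] /eqP E2; rewrite E2 ?Hd ?shade_s ?shade_s2 ?shade_s3 ?Hd ?eqxx // in U2 D *.
    by case: (sgn _) D; case: (sgn _) => //= _; rewrite !add0r ?addr0 ?addrN ?addNr.
  by case: (sgn _) D; case: (sgn _) => //= _; rewrite !add0r ?addr0 ?addrN ?addNr.
move=> /or4P[] /eqP E1; rewrite E1 ?Hd ?shade_s ?shade_s2 ?shade_s3 ?Hd // in U1 D *;
move=> /or4P[] /eqP E2; rewrite E2 ?Hd ?shade_s ?shade_s2 ?shade_s3 ?Hd ?eqxx // in U2 D *.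
  by case: (sgn _) D; case: (sgn _) => //= _; rewrite !addr0 ?addrN ?addNr.
by case: (sgn _) D; case: (sgn _) => //= _; rewrite !addr0 ?addrN ?addNr.
Qed.


Lemma fe_al (p : F -> R) d : fe p (al d) = fe p d.
Proof. by rewrite /fe reg_al reg_sinv_al addrC. Qed.

Lemma fe_st (p : F -> R) d : Epd p (al d) = 0 -> fe p (straight s al d) = - fe p d.
Proof.
rewrite -(fe_al p d) /straight; move: (al d) => e; rewrite /fe /Epd s4 => H.
by apply/eqP; rewrite -addr_eq0 -H; apply/eqP; ring.
Qed.

Lemma chi_s x : chi (reg (s x)) = - chi (reg x).
Proof. by rewrite /chi shade_s; case: (shaded _); rewrite ?opprK. Qed.
Lemma chi_s3 x : chi (reg (s (s (s x)))) = - chi (reg x).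
Proof. by rewrite /chi shade_s3; case: (shaded _); rewrite ?opprK. Qed.
Lemma chi2 r : chi r * chi r = 1.
Proof. by rewrite /chi; case: (shaded _); rewrite ?mulr1 ?mulrNN ?mulr1. Qed.

Lemma fe_sig2 d : fe sig d * fe sig d = 1.
Proof.
rewrite /fe /sig shade_s3; case: (shaded _) => /=; case: (sgn _); 
  by rewrite ?add0r ?addr0 ?mulr1 ?mulrNN ?mulr1.
Qed.

Lemma kernel (p : {ffun F -> R}) : (forall v, game_apply vtx reg a p v = 0) ->
  exists c al0 : R, forall r, p r = c * sig r + al0 * chi r.
Proof.
move=> Hp; have E0 := null_Epd Hp.
have [x0 _] := T_inhabited.
pose h d := fe p d * fe sig d.
have Hh : forall x y, h x = h y.
  apply: const_st => x; last by rewrite /h !fe_al.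
  by rewrite /h !fe_st ?E0 ?Epd_sig // mulrNN.
set c := h x0.
have hc d : fe p d = c * fe sig d.
  by rewrite /c (Hh x0 d) /h -mulrA fe_sig2 mulr1.
pose q r := p r - c * sig r.
have fq d : fe q d = 0.
  have := hc d; rewrite /fe /q => H.
  transitivity ((p (reg d) + p (reg (s (s (s d))))) - c * (sig (reg d) + sig (reg (s (s (s d)))))).
    by ring.
  by rewrite H subrr.
pose g d := chi (reg d) * q (reg d).
have Hg : forall x y, g x = g y.
  apply: const_sal => x.
    have := fq (s x); rewrite /fe s4 /g chi_s => /eqP; rewrite addr_eq0 => /eqP->.
    by rewrite mulrNN.
  have := fq x; rewrite /fe /g reg_al chi_s3 => /eqP; rewrite addrC addr_eq0 => /eqP->.
  by rewrite mulrNN.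
exists c, (g x0) => r.
case: HF => _ /(_ r) [d <-].
rewrite (Hg x0 d) /g -mulrA [q _ * _]mulrC mulrA chi2 mul1r /q.
by rewrite addrC subrK.
Qed.

End Ring.


Section Lin.
Local Open Scope ring_scope.
Variables (R : comUnitRingType) (a : V -> F -> R).

Lemma gameD (p q : {ffun F -> R}) v :
  game_apply vtx reg a (p + q) v = game_apply vtx reg a p v + game_apply vtx reg a q v.
Proof. by rewrite /game_apply -big_split; apply: eq_bigr => r _; rewrite ffunE mulrDr. Qed.
Lemma gameB (p q : {ffun F -> R}) v :
  game_apply vtx reg a (p - q) v = game_apply vtx reg a p v - game_apply vtx reg a q v.
Proof. by rewrite /game_apply -sumrB; apply: eq_bigr => r _; rewrite !ffunE mulrBr. Qed.
End Lin.

Section Count.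
Local Open Scope ring_scope.
Variables (R : finComUnitRingType) (a : V -> F -> R).

Definition DS (S : {set F}) := [set p : {ffun F -> R} | [forall r in S, p r == 0]].
Definition Phi (p : {ffun F -> R}) : {ffun V -> R} := [ffun v => - game_apply vtx reg a p v].
Definition KS (S : {set F}) := [set p in DS S | [forall v, game_apply vtx reg a p v == 0]].

Lemma card_DS S : #|DS S| = (#|R| ^ (#|F| - #|S|))%N.
Proof.
have -> : (#|F| - #|S| = #|~: S|)%N by rewrite [#|~: S|]cardsCs setCK.
rewrite -(card_pffun_on 0 (~: S) predT); apply: eq_card => p.
rewrite inE; apply/forallP/pffun_onP => [H|[H _] r].
  split; last by move=> x _.
  apply/subsetP => r; rewrite !inE; apply: contra => rS.
  by have := H r; rewrite rS.
apply/implyP => rS; apply/negPn/negP => Hr.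
by have := subsetP H r; rewrite !inE Hr rS => /(_ isT).
Qed.

Lemma card_fibers S : #|DS S| = (#|Phi @: DS S| * #|KS S|)%N.
Proof.
rewrite -sum1_card (partition_big Phi (mem (Phi @: DS S))) /=; last first.
  by move=> p Hp; apply: imset_f.
rewrite -sum_nat_const; apply: eq_bigr => c /imsetP[p0 Hp0 ->].
rewrite sum1_card -(card_imset (KS S) (addrI p0)).
apply: eq_card => p; rewrite unfold_in /=.
apply/idP/imsetP => [/andP[Hp /eqP E]|[k Hkk ->]].
  exists (p - p0); last by rewrite addrC subrK.
  rewrite !inE; apply/andP; split.
    move: Hp Hp0; rewrite !inE => /forallP H1 /forallP H2; apply/forallP => r.
    apply/implyP => rS; move: (H1 r) (H2 r); rewrite rS /= !ffunE => /eqP-> /eqP->.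
    by rewrite subrr.
  apply/forallP => v; rewrite gameB; have := congr1 (fun f : {ffun V -> R} => f v) E.
  by rewrite !ffunE => /eqP; rewrite eqr_opp subr_eq0.
move: Hkk Hp0; rewrite !inE => /andP[/forallP H1 /forallP Hkk] /forallP H2.
apply/andP; split.
  apply/forallP => r; apply/implyP => rS; move: (H1 r) (H2 r); rewrite rS /= !ffunE.
  by move=> /eqP-> /eqP->; rewrite addr0.
apply/eqP/ffunP => v; rewrite !ffunE gameD.
by move: (Hkk v) => /eqP->; rewrite addr0.
Qed.

End Count.


Lemma exists_sh_un : exists rs ru, shaded rs /\ ~~ shaded ru.
Proof.
have [d _] := T_inhabited; case Hd: (shaded (reg d)).
  by exists (reg d), (reg (s d)); rewrite shade_s Hd.
by exists (reg (s d)), (reg d); rewrite shade_s Hd.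
Qed.

Section Main.
Local Open Scope ring_scope.
Variables (R : comUnitRingType) (a : V -> F -> R).
Hypothesis Ha : forall v, exists av, not_zero_divisor av /\ forall r, incident vtx reg v r -> a v r = av.

Definition nullp (p : {ffun F -> R}) := forall v, game_apply vtx reg a p v = 0.

Lemma sig_sh r : shaded r -> sig R r = 0. Proof. by rewrite /sig => ->. Qed.
Lemma chi_sh r : shaded r -> chi R r = 1. Proof. by rewrite /chi => ->. Qed.
Lemma sig_un r : ~~ shaded r -> sig R r = if sgn r then 1 else -1.
Proof. by rewrite /sig => /negbTE->. Qed.
Lemma chi_un r : ~~ shaded r -> chi R r = -1. Proof. by rewrite /chi => /negbTE->. Qed.

Lemma uniq1 r r' (p : {ffun F -> R}) : shaded r -> ~~ shaded r' -> nullp p ->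
  p r = 0 -> p r' = 0 -> p = 0.
Proof.
move=> Hr Hr' Hp; have [c [al0 E]] := kernel Ha Hp.
rewrite !E sig_sh // chi_sh // sig_un // chi_un // mulr0 add0r mulr1 => Ha0.
rewrite Ha0 mul0r addr0 => Hc.
have {}Hc : c = 0 by case: (sgn r') Hc; rewrite ?mulr1 ?mulrN1 // => /eqP; rewrite oppr_eq0 => /eqP.
by apply/ffunP => x; rewrite E Hc Ha0 !mul0r addr0 ffunE.
Qed.

Lemma uniq2 r r' (p : {ffun F -> R}) : (forall x : R, x + x = 0 -> x = 0) ->
  ~~ shaded r -> ~~ shaded r' -> sgn r != sgn r' -> nullp p ->
  p r = 0 -> p r' = 0 -> p = 0.
Proof.
move=> H2 Hr Hr' Hs Hp; have [c [al0 E]] := kernel Ha Hp.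
rewrite !E !sig_un // !chi_un // !mulrN1 => E1 E2.
have [c0 a0] : c = 0 /\ al0 = 0.
  move: E1 E2; case: (sgn r) Hs; case: (sgn r') => //= _; rewrite ?mulr1 ?mulrN1.
    move=> /eqP; rewrite subr_eq0 => /eqP Hc; rewrite Hc => /eqP.
    by rewrite -opprD oppr_eq0 => /eqP /H2 ->.
  move=> /eqP H /eqP; rewrite subr_eq0 => /eqP Hc; move: H; rewrite Hc.
  by rewrite -opprD oppr_eq0 => /eqP /H2 ->.
by apply/ffunP => x; rewrite E c0 a0 !mul0r addr0 ffunE.
Qed.

Lemma eu (c : {ffun V -> R}) r r' :
  (exists p, [/\ solving vtx reg a c p, p r = 0 & p r' = 0]) ->
  (forall p, nullp p -> p r = 0 -> p r' = 0 -> p = 0) ->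
  exists! p, [/\ solving vtx reg a c p, p r = 0 & p r' = 0].
Proof.
move=> [p [Hs H1 H2]] Hu; exists p; split => // q [Hq Q1 Q2].
apply/eqP; rewrite eq_sym -subr_eq0; apply/eqP; apply: Hu.
- by move=> v; rewrite gameB Hs Hq subrr.
- by rewrite !ffunE Q1 H1 subrr.
- by rewrite !ffunE Q2 H2 subrr.
Qed.

Definition phi (x : R * R) : {ffun F -> R} := [ffun r => x.1 * sig R r + x.2 * chi R r].

Lemma phi_null x : nullp (phi x).
Proof.
apply: Epd_null => // d.
have -> : Epd (phi x) d = x.1 * Epd (sig R) d + x.2 * Epd (chi R) d.
  by rewrite /Epd !ffunE; ring.
by rewrite Epd_sig // Epd_chi mulr0 mulr0 addr0.
Qed.

Lemma phi_sh x r : shaded r -> phi x r = x.2.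
Proof. by move=> H; rewrite ffunE sig_sh // chi_sh // mulr0 add0r mulr1. Qed.
Lemma phi_un x r : ~~ shaded r -> phi x r = (if sgn r then x.1 else - x.1) - x.2.
Proof. by move=> H; rewrite ffunE sig_un // chi_un //; case: (sgn r); rewrite ?mulr1 ?mulrN1. Qed.

Lemma phi_inj : injective phi.
Proof.
have [rs [ru [Hs Hu]]] := exists_sh_un.
move=> [x1 x2] [y1 y2] E.
have E2 : x2 = y2 by have := congr1 (fun f : {ffun F -> R} => f rs) E; rewrite !phi_sh.
have := congr1 (fun f : {ffun F -> R} => f ru) E; rewrite !phi_un //= E2.
move=> /addIr; case: (sgn ru) => [->//|/eqP]; rewrite eqr_opp => /eqP->//.
Qed.

Lemma kernel_phi p : nullp p -> exists x, p = phi x.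
Proof.
move=> Hp; have [c [al0 E]] := kernel Ha Hp; exists (c, al0).
by apply/ffunP => r; rewrite E ffunE.
Qed.

End Main.


Section Fin.
Local Open Scope ring_scope.
Variables (R : finComUnitRingType) (a : V -> F -> R).
Hypothesis Ha : forall v, exists av, not_zero_divisor av /\ forall r, incident vtx reg v r -> a v r = av.

Lemma game0 v : game_apply vtx reg a 0 v = 0.
Proof. by rewrite /game_apply big1 // => r _; rewrite ffunE mulr0. Qed.

Lemma exist_fin r r' : r != r' -> (forall p, nullp a p -> p r = 0 -> p r' = 0 -> p = 0) ->
  forall c, exists p, [/\ solving vtx reg a c p, p r = 0 & p r' = 0].
Proof.
move=> Hne Hu c; set S := [set r; r'].
have K1 : KS a S = [set (0 : {ffun F -> R})].
  apply/setP => p; rewrite !inE; apply/andP/eqP => [[H1 /forallP H2]|->].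
    apply: Hu; first by move=> v; apply/eqP; apply: H2.
      by move: H1 => /forallP /(_ r); rewrite !inE eqxx /= => /eqP.
    by move: H1 => /forallP /(_ r'); rewrite !inE eqxx orbT /= => /eqP.
  split; first by apply/forallP => x; rewrite ffunE eqxx implybT.
  by apply/forallP => v; rewrite game0.
have := card_fibers a S; rewrite card_DS K1 cards1 muln1 cards2 Hne cardF.
rewrite addnK -card_ffun => Hc.
have : c \in Phi a @: DS R S.
  have -> : Phi a @: DS R S = setT by apply/eqP; rewrite eqEcard subsetT cardsT Hc leqnn.
  by rewrite inE.
move=> /imsetP[p Hp ->]; exists p; split.
- by move=> v; rewrite ffunE opprK.
- by move: Hp; rewrite inE => /forallP /(_ r); rewrite !inE eqxx /= => /eqP.
- by move: Hp; rewrite inE => /forallP /(_ r'); rewrite !inE eqxx orbT /= => /eqP.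
Qed.


Lemma KS_phi S : KS a S = @phi R @: [set x | [forall r in S, @phi R x r == 0]].
Proof.
apply/setP => p; rewrite !inE; apply/andP/imsetP => [[H1 /forallP H2]|[x Hx ->]].
  have [x Ex] := kernel_phi Ha (p := p) (fun v => eqP (H2 v)).
  by exists x => //; rewrite inE -Ex.
split; first by move: Hx; rewrite !inE.
by apply/forallP => v; rewrite phi_null.
Qed.

Lemma q_image (S : {set F}) :
  #|[set c : {ffun V -> R} | [exists p : {ffun F -> R},
       [forall r in S, p r == 0] && [forall v, game_apply vtx reg a p v == - c v]]]|
  = #|Phi a @: DS R S|.
Proof.
apply: eq_card => c; rewrite !inE; apply/existsP/imsetP => [[p /andP[H1 /forallP H2]]|[p Hp ->]].
  exists p; first by rewrite inE.
  by apply/ffunP => v; rewrite ffunE (eqP (H2 v)) opprK.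
exists p; apply/andP; split; first by move: Hp; rewrite inE.
by apply/forallP => v; rewrite ffunE opprK.
Qed.


Lemma count_gen m : #|R| = m -> (1 < m)%N ->
  #|[set c : R | c + c == 0]| = (if odd m then 1 else 2)%N ->
  forall S : {set F},
    let i := #|S| in
    let n := #|V| in
    let q := #|[set c : {ffun V -> R} |
                 [exists p : {ffun F -> R},
                    [forall r in S, p r == 0] &&
                    [forall v, game_apply vtx reg a p v == - c v]]]| in
    [/\ [exists r in S, shaded r] && [exists r in S, ~~ shaded r] -> q = (m ^ (n + 2 - i))%N,
        (0 < i)%N && ((S \subset shaded) || ((S \subset [pred r | ~~ shaded r]) && same_sign sgn S))
          -> q = (m ^ (n + 1 - i))%N
      & (S \subset [pred r | ~~ shaded r]) && ~~ same_sign sgn S ->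
          q = (if odd m then m ^ (n + 2 - i) else m ^ (n + 2 - i) %/ 2)%N].
Proof.
move=> HR Hm H2 S i n q.
have Hq : q = #|Phi a @: DS R S| := q_image S.
have Hf := card_fibers a S.
rewrite card_DS HR cardF KS_phi (card_imset _ (phi_inj (R := R))) -Hq in Hf.
set P := [set x | _] in Hf.
have m0 : (0 < m)%N by lia.
split.
- move=> /andP[/existsP[r1 /andP[S1 H1]] /existsP[r2 /andP[S2 H2']]].
  have EP : P = [set (0, 0)].
    apply/setP => -[x1 x2]; rewrite !inE; apply/forallP/eqP => [H|[-> ->] r].
      have := H r1; rewrite S1 phi_sh //= => /eqP E2.
      have := H r2; rewrite S2 phi_un //= E2 subr0.
      by case: (sgn r2); rewrite ?oppr_eq0 => /eqP ->.
    by rewrite ffunE !mul0r addr0 eqxx implybT.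
  by rewrite EP cards1 muln1 in Hf.
- move=> /andP[Hi Hor].
  have [r0 S0] : exists r0, r0 \in S by apply/card_gt0P.
  have [rs [ru [Hrs Hru]]] := exists_sh_un.
  have [Hil HP] : (i <= n + 1)%N /\ #|P| = m.
    case/orP: Hor => [Hsh|/andP[Hun Hss]].
      split.
        have : S \subset [set~ ru].
          apply/subsetP => r Sr; rewrite !inE; apply/eqP => E.
          by have := subsetP Hsh r Sr; rewrite E unfold_in (negbTE Hru).
        by move/subset_leq_card; rewrite cardsC1 cardF /i /n; lia.
      have Hinj : injective (fun c : R => (c, 0 : R)) by move=> x y [].
      rewrite -HR -[in RHS](card_imset _ Hinj).
      apply: eq_card => -[x1 x2]; rewrite !inE; apply/forallP/imsetP => [H|[c _ [-> ->]] r].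
        exists x1 => //; have := H r0; rewrite S0 phi_sh //=; last exact: (subsetP Hsh).
        by move=> /eqP ->.
      by apply/implyP => Sr; rewrite phi_sh //=; apply: (subsetP Hsh).
    split.
      have : S \subset [set~ rs].
        apply/subsetP => r Sr; rewrite !inE; apply/eqP => E.
        by have := subsetP Hun r Sr; rewrite inE E Hrs.
      by move/subset_leq_card; rewrite cardsC1 cardF /i /n; lia.
    have Hsg r : r \in S -> sgn r = sgn r0.
      by move=> Sr; move/forallP: Hss => /(_ r); rewrite Sr => /forallP /(_ r0); rewrite S0 => /eqP.
    have Hu r : r \in S -> ~~ shaded r by move=> Sr; have := subsetP Hun r Sr; rewrite inE.
    have Hinj : injective (fun c : R => (c, if sgn r0 then c else - c)) by move=> x y [].
    rewrite -HR -[in RHS](card_imset _ Hinj).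
    apply: eq_card => -[x1 x2]; rewrite !inE; apply/forallP/imsetP => [H|[c _ [-> ->]] r].
      exists x1 => //; have := H r0; rewrite S0 phi_un ?Hu //= subr_eq0 => /eqP ->.
      by [].
    by apply/implyP => Sr; rewrite phi_un ?Hu //= Hsg // subrr.
  rewrite HP in Hf; move: Hf.
  have -> : (#|V| + 2 - #|S| = (n + 1 - i).+1)%N by rewrite /n /i; lia.
  by rewrite expnS mulnC => /eqP; rewrite eqn_pmul2r // => /eqP.
- move=> /andP[Hun Hns].
  have Hu r : r \in S -> ~~ shaded r by move=> Sr; have := subsetP Hun r Sr; rewrite inE.
  have [rp [rn [Sp Sn Hp Hn]]] : exists rp rn, [/\ rp \in S, rn \in S, sgn rp & ~~ sgn rn].
    move/forallPn: Hns => [r1]; rewrite negb_imply => /andP[S1 /forallPn[r2]].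
    rewrite negb_imply => /andP[S2 Hd].
    case H1: (sgn r1) Hd; case H2'': (sgn r2) => // _.
      by exists r1, r2; rewrite H1 H2''.
    by exists r2, r1; rewrite H1 H2''.
  have HP : #|P| = #|[set c : R | c + c == 0]|.
    rewrite -(card_imset _ (f := fun c : R => (c, c))); last by move=> x y [].
    apply: eq_card => -[x1 x2]; rewrite !inE; apply/forallP/imsetP => [H|[c Hc [-> ->]] r].
      have := H rp; rewrite Sp phi_un ?Hu //= Hp subr_eq0 => /eqP E.
      have := H rn; rewrite Sn phi_un ?Hu //= (negbTE Hn) -E.
      rewrite -opprD oppr_eq0 => Hc.
      by exists x1; rewrite ?inE // E.
    apply/implyP => Sr; rewrite phi_un ?Hu //=; move: Hc; rewrite inE.
    by case: (sgn r) => // /eqP E; rewrite ?subrr // -opprD E oppr0.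
  rewrite HP H2 in Hf; move: Hf; case: (odd m).
    by rewrite muln1.
  by move=> ->; rewrite mulnK.
Qed.

End Fin.


Section IntEx.
Local Open Scope ring_scope.
Variables (r r' : F).
Hypotheses (Hr : shaded r) (Hr' : ~~ shaded r').

Definition Xs := ~: [set r; r'].

Lemma cardX : #|V| = #|Xs|.
Proof.
have Hne : r != r' by apply/eqP => E; move: Hr'; rewrite -E Hr.
have := cardsC [set r; r']; rewrite cards2 Hne cardF /Xs; lia.
Qed.

Definition gF (i : 'I_#|V|) : F := enum_val (A := Xs) (cast_ord cardX i).
Definition gV (j : 'I_#|V|) : V := enum_val j.

Lemma gF_inj : injective gF.
Proof. by move=> i j /enum_val_inj /cast_ord_inj. Qed.
Lemma gF_X i : gF i \in Xs. Proof. exact: enum_valP. Qed.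
Lemma gVK v : gV (enum_rank v) = v. Proof. exact: enum_rankK. Qed.

Definition Mx (K : comUnitRingType) : 'M[K]_#|V| :=
  \matrix_(i, j) (if incident vtx reg (gV j) (gF i) then 1 else 0).
Definition pw (K : comUnitRingType) (w : 'rV[K]_#|V|) : {ffun F -> K} :=
  [ffun x => \sum_(i | gF i == x) w 0 i].

Lemma pw_gF (K : comUnitRingType) (w : 'rV[K]_#|V|) i : pw w (gF i) = w 0 i.
Proof. by rewrite ffunE (big_pred1 i) // => k /=; rewrite (inj_eq gF_inj). Qed.

Lemma pw_out (K : comUnitRingType) (w : 'rV[K]_#|V|) x : x \notin Xs -> pw w x = 0.
Proof.
move=> Hx; rewrite ffunE big_pred0 // => k; apply/eqP => E.
by move: Hx; rewrite -E gF_X.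
Qed.

Lemma game_pw (K : comUnitRingType) (a : V -> F -> K) (w : 'rV[K]_#|V|) j :
  (forall x, incident vtx reg (gV j) x -> a (gV j) x = 1) ->
  game_apply vtx reg a (pw w) (gV j) = (w *m Mx K) 0 j.
Proof.
move=> Ha1; rewrite mxE /game_apply.
rewrite (eq_bigr (fun x => pw w x)) => [|x Hx]; last by rewrite Ha1 // mul1r.
have -> : \sum_i w 0 i * Mx K i j = \sum_(i | incident vtx reg (gV j) (gF i)) w 0 i.
  rewrite [RHS]big_mkcond; apply: eq_bigr => i _; rewrite mxE.
  by case: (incident _ _ _ _); rewrite ?mulr1 ?mulr0.
rewrite (partition_big gF (fun x => incident vtx reg (gV j) x)) //.
apply: eq_bigr => x Hx; rewrite ffunE; apply: eq_bigl => i.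
by case E: (gF i == x); rewrite ?andbF // (eqP E) Hx.
Qed.

Lemma Mx_map p : map_mx intr (Mx int) = Mx 'F_p.
Proof.
by apply/matrixP => i j; rewrite !mxE; case: (incident _ _ _ _); rewrite ?rmorph1 ?rmorph0.
Qed.

Lemma Mx_inj_Fp p (w : 'rV['F_p]_#|V|) : w *m Mx 'F_p = 0 -> w = 0.
Proof.
move=> Hw.
have Ha1 : forall v, exists av : 'F_p, not_zero_divisor av /\
    forall x, incident vtx reg v x -> (fun _ _ => 1) v x = av.
  by move=> v; exists 1; split => // y; rewrite mul1r.
have H0 : pw w = 0.
  apply: (uniq1 Ha1 Hr Hr').
  - move=> v; rewrite -(gVK v) game_pw // Hw mxE //.
  - by apply: pw_out; rewrite !inE eqxx.
  - by apply: pw_out; rewrite !inE eqxx orbT.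
by apply/rowP => i; rewrite -pw_gF H0 !ffunE mxE.
Qed.


Lemma intr_Fp0 p (z : int) : prime p -> (p %| `|z|)%N -> (z%:~R : 'F_p) = 0.
Proof.
move=> pp Hd; rewrite -[z]mulz_sign_abs rmorphM /= intr_sign.
rewrite -[(`|z|%N)%:~R]/((`|z|%N)%:R) -(Fp_nat_mod pp) (eqP Hd) mulr0 //.
Qed.

Lemma int_unit_of (z : int) : (forall p, prime p -> (z%:~R : 'F_p) != 0) -> z \is a GRing.unit.
Proof.
move=> H.
have Hz : (`|z| = 1)%N.
  case E: `|z|%N => [|[|k]] //.
    by have := H 2 isT; rewrite intr_Fp0 ?eqxx // E.
  have Hp : prime (pdiv k.+2) by apply: pdiv_prime.
  by have := H _ Hp; rewrite intr_Fp0 // ?eqxx // E pdiv_dvd.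
by rewrite -[z]mulz_sign_abs Hz mulr1 unitrX ?unitrN1.
Qed.

Lemma Mx_unit : Mx int \in unitmx.
Proof.
rewrite unitmxE; apply: int_unit_of => p pp.
rewrite -det_map_mx Mx_map; apply/det0P => -[w Hw0 Hw].
by move: Hw0; rewrite (Mx_inj_Fp Hw) eqxx.
Qed.

Lemma exist_int (a : V -> F -> int) : (forall v x, incident vtx reg v x -> a v x = 1) ->
  forall c : {ffun V -> int}, exists p, [/\ solving vtx reg a c p, p r = 0 & p r' = 0].
Proof.
move=> Ha1 c.
set cw : 'rV[int]_#|V| := \row_j (- c (gV j)).
exists (pw (cw *m invmx (Mx int))); split.
- move=> v; rewrite -(gVK v) game_pw; last by move=> x; apply: Ha1.
  by rewrite mulmxKV ?Mx_unit // mxE.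
- by apply: pw_out; rewrite !inE eqxx.
- by apply: pw_out; rewrite !inE eqxx orbT.
Qed.

End IntEx.

End Comb.

Lemma vadd m (c : 'Z_m) : val (c + c)%R = ((val c + val c) %% (Zp_trunc m).+2)%N.
Proof. by []. Qed.
Lemma Z2card m : (1 < m)%N -> #|[set c : 'Z_m | (c + c == 0)%R]| = (if odd m then 1 else 2)%N.
Proof.
move=> m1; have Hm := Zp_cast m1.
set M := (Zp_trunc m).+2 in Hm.
have key (c : 'Z_m) : ((c + c == 0)%R) = ((val c == 0%N) || (val c + val c == M)%N).
  have Hc : (val c < M)%N by apply: ltn_ord.
  apply/eqP/orP => [/(congr1 val)|].
    rewrite vadd /= => H.
    case: (ltnP (val c + val c) M) => Hcm.
      by left; move: H; rewrite modn_small //; lia.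
    right; move: H; rewrite -(subnKC Hcm) modnDl modn_small; lia.
  move=> H; apply: val_inj; rewrite vadd /=; case: H => /eqP ->.
    by rewrite mod0n.
  by rewrite modnn.
have Mg : (1 < M)%N by rewrite /M.
case: (boolP (odd m)) => Hodd.
  rewrite -(cards1 (0 : 'Z_m)%R); apply: eq_card => c; rewrite !inE key.
  have -> : (val c + val c == M) = false by apply/negbTE; apply/eqP => E; move: Hodd; rewrite -Hm -E addnn odd_double.
  by rewrite orbF; apply/eqP/eqP => [E|->//]; apply: val_inj.
have Hh : (M./2 < M)%N by rewrite /M; lia.
have HM : (M./2).*2 = M by have := odd_double_half M; rewrite Hm (negbTE Hodd) add0n.
have Ne : (0 : 'Z_m)%R != Ordinal Hh by rewrite -val_eqE.
rewrite -[2%N]/((true).+1) -Ne -cards2; apply: eq_card => c; rewrite !inE key.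
congr (_ || _).
rewrite -val_eqE /=; apply/eqP/eqP => [E|->]; last by rewrite addnn.
by move: HM; rewrite -addnn; lia.
Qed.

Unset Implicit Arguments.
Local Open Scope ring_scope.

Theorem mainTheorem16 (T : finType) (s al : {perm T}) (V F : finType)
    (vtx : T -> V) (reg : T -> F) (k : option nat) (a : V -> F -> Zk k)
    (shaded : pred F) (sgn : F -> bool) :
  knot_map s al ->
  labeling s vtx ->
  labeling (face_perm s al) reg ->
  reduced vtx reg ->
  valid_k k ->
  is_version vtx reg a ->
  checkerboard s reg shaded ->
  alternating_signing vtx reg shaded sgn ->
  [/\ (forall r r' : F, shaded r -> ~~ shaded r' ->
         forall c : {ffun V -> Zk k},
           exists! p : {ffun F -> Zk k}, [/\ solving vtx reg a c p, p r = 0 & p r' = 0]),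
      (forall m : nat, k = Some m -> odd m ->
         forall r r' : F, ~~ shaded r -> ~~ shaded r' -> sgn r != sgn r' ->
         forall c : {ffun V -> Zk k},
           exists! p : {ffun F -> Zk k}, [/\ solving vtx reg a c p, p r = 0 & p r' = 0])
    & @part3 T V F vtx reg k shaded sgn a].
Proof.
move=> Hk HV HF Hred Hkv Hver Hch Has.
case: k a Hver Hkv => [m|] a Hver Hkv /=.
- have Ha : forall v, exists av, not_zero_divisor av /\ forall r, incident vtx reg v r -> a v r = av.
    by move=> v; have := Hver v; rewrite (Hred v).
  have Hm : (1 < m)%N := Hkv.
  have HZ := Z2card Hm.
  split.
  + move=> r r' Hr Hr' c; apply: eu.
      apply: (exist_fin Hk HV HF); last by move=> p; apply: (uniq1 Hk HV HF Hred Hch Has Ha).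
      by apply/eqP => E; move: Hr'; rewrite -E Hr.
    by move=> p; apply: (uniq1 Hk HV HF Hred Hch Has Ha).
  + move=> m' [<-] Hodd r r' Hr Hr' Hs c.
    have H2 : forall x : 'Z_m, x + x = 0 -> x = 0.
      move: HZ; rewrite Hodd => /eqP /cards1P [y Hy] x Hx.
      have : x \in [set c : 'Z_m | c + c == 0] by rewrite inE Hx.
      have : (0 : 'Z_m) \in [set c : 'Z_m | c + c == 0] by rewrite inE addr0.
      by rewrite Hy !inE => /eqP -> /eqP.
    apply: eu.
      apply: (exist_fin Hk HV HF); last by move=> p; apply: (uniq2 Hk HV HF Hred Hch Has Ha).
      by apply/eqP => E; move: Hs; rewrite E eqxx.
    by move=> p; apply: (uniq2 Hk HV HF Hred Hch Has Ha).
  + move=> S; apply: (count_gen Hk HV HF Hred Hch Has Ha) => //.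
    by rewrite card_ord Zp_cast.
- have Ha1 : forall v x, incident vtx reg v x -> a v x = 1.
    move=> v x Hx; case: (Hver v x Hx) => // /andP[]; by rewrite (Hred v).
  have Ha : forall v, exists av : int, not_zero_divisor av /\ forall r, incident vtx reg v r -> a v r = av.
    by move=> v; exists 1; split; [move=> y; rewrite mul1r | exact: Ha1].
  split => //.
  move=> r r' Hr Hr' c; apply: eu.
    exact: (exist_int Hk HV HF Hred Hch Has Hr Hr' Ha1).
  by move=> p; apply: (uniq1 Hk HV HF Hred Hch Has Ha).
Qed.
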